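(* In the social learning model with Gaussian signals, for every $\varepsilon>0$ there exists $k>0$ such that for all $t\ge1$, $$\mathbb{P}_+\big(a_t=-1\,\big|\,a_\tau=+1\text{ for all }\tau<t\big)>\frac{k}{t^{1+\varepsilon}}.$$
   Context: Social learning model. A state $\theta\in\{-1,+1\}$ is drawn with $\mathbb{P}(\theta=+1)=\mathbb{P}(\theta=-1)=1/2$. Agents $t=1,2,\dots$ receive private signals $s_t\in\mathbb{R}$ that are i.i.d. conditionally on $\theta$, with CDF $F_+$ if $\theta=+1$ and $F_-$ if $\theta=-1$; $F_+$ and $F_-$ are mutually absolutely continuous. Let $L_t=\log\frac{\mathbb{P}(\theta=+1\mid s_t)}{\mathbb{P}(\theta=-1\mid s_t)}$ be the private log-likelihood ratio, and let $G_+$, $G_-$ denote the CDFs of $L_t$ conditional on $\theta=+1$, $\theta=-1$ respectively. Signals are assumed unbounded: for every $M\in\mathbb{R}$, $\mathbb{P}(L_t>M)>0$ and $\mathbb{P}(L_t<-M)>0$. Agent $t$ observes $a_1,\dots,a_{t-1}$ and her own signal and chooses $a_t\in\{-1,+1\}$ (utility $1$ if $a_t=\theta$, else $0$). The public belief is $\mu_t=\mathbb{P}(\theta=+1\mid a_1,\dots,a_{t-1})$ and $\ell_t=\log\frac{\mu_t}{1-\mu_t}$ (so $\ell_1=0$). In equilibrium $a_t=+1$ iff $\ell_t+L_t>0$, and otherwise $a_t=-1$. Consequently $\ell_{t+1}=\ell_t+D_+(\ell_t)$ if $a_t=+1$ and $\ell_{t+1}=\ell_t+D_-(\ell_t)$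 if $a_t=-1$, where $D_+(x)=\log\frac{1-G_+(-x)}{1-G_-(-x)}$ and $D_-(x)=\log\frac{G_+(-x)}{G_-(-x)}$. We write $\mathbb{P}_+(\cdot)=\mathbb{P}(\cdot\mid\theta=+1)$ and $\mathbb{E}_+$ for the corresponding expectation. Gaussian signals: $F_+$ is the normal distribution with mean $+1$ and variance $\sigma^2$, and $F_-$ is the normal distribution with mean $-1$ and variance $\sigma^2$, for some $\sigma>0$. *)

(* Defs.v *)
From Stdlib Require Import Reals Lra.
Open Scope R_scope.

Definition std_normal_density (x : R) : R := exp (- (x * x) / 2) / sqrt (2 * PI).

(* Phi is the standard normal CDF: its derivative is the standard normal
   density everywhere and it tends to 0 at -infinity (this determines Phi). *)
Definition is_std_normal_cdf (Phi : R -> R) : Prop :=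
  (forall x, derivable_pt_lim Phi x (std_normal_density x)) /\
  (forall e, 0 < e -> exists M, forall x, x < M -> Rabs (Phi x) < e).

(* Signal CDFs: N(+1, sigma^2) under theta=+1 and N(-1, sigma^2) under theta=-1. *)
Definition F_plus (Phi : R -> R) (sigma s : R) : R := Phi ((s - 1) / sigma).
Definition F_minus (Phi : R -> R) (sigma s : R) : R := Phi ((s + 1) / sigma).

(* Private log-likelihood ratio of signal s (uniform prior):
   L(s) = log (f_+(s)/f_-(s)) = 2 s / sigma^2, strictly increasing,
   so  L(s) <= x  iff  s <= sigma^2 x / 2. *)
Definition LLR (sigma s : R) : R := 2 * s / (sigma * sigma).

(* CDFs of L_t conditional on theta = +1 / -1. *)
Definition G_plus (Phi : R -> R) (sigma x : R) : R :=
  F_plus Phi sigma (sigma * sigma * x / 2).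
Definition G_minus (Phi : R -> R) (sigma x : R) : R :=
  F_minus Phi sigma (sigma * sigma * x / 2).

Definition D_plus (Phi : R -> R) (sigma x : R) : R :=
  ln ((1 - G_plus Phi sigma (- x)) / (1 - G_minus Phi sigma (- x))).
Definition D_minus (Phi : R -> R) (sigma x : R) : R :=
  ln (G_plus Phi sigma (- x) / G_minus Phi sigma (- x)).

(* Public log-likelihood ratio of agent t = n+1 on the event that
   a_1 = ... = a_n = +1 (deterministic on that event): ell_1 = 0,
   ell_{t+1} = ell_t + D_+(ell_t). *)
Fixpoint ell_plus (Phi : R -> R) (sigma : R) (n : nat) : R :=
  match n with
  | O => 0
  | S m => ell_plus Phi sigma m + D_plus Phi sigma (ell_plus Phi sigma m)
  end.

(* P_+(a_t = +1 | a_1 = ... = a_{t-1} = +1) = P_+(ell_t + L_t > 0)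
   = 1 - G_+(-ell_t), and P_+(a_t = -1 | same) = G_+(-ell_t);
   here t = n+1. *)
Definition prob_plus_step (Phi : R -> R) (sigma : R) (n : nat) : R :=
  1 - G_plus Phi sigma (- ell_plus Phi sigma n).
Definition prob_minus_step (Phi : R -> R) (sigma : R) (n : nat) : R :=
  G_plus Phi sigma (- ell_plus Phi sigma n).

(* P_+(a_1 = ... = a_n = +1), by independence of signals given theta. *)
Fixpoint prob_all_plus (Phi : R -> R) (sigma : R) (n : nat) : R :=
  match n with
  | O => 1
  | S m => prob_all_plus Phi sigma m * prob_plus_step Phi sigma m
  end.

(* P_+(a_1 = ... = a_n = +1, a_{n+1} = -1). *)
Definition prob_plus_then_minus (Phi : R -> R) (sigma : R) (n : nat) : R :=
  prob_all_plus Phi sigma n * prob_minus_step Phi sigma n.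

(* P_+(a_t = -1 | a_tau = +1 for all tau < t), with t = n+1
   (ratio definition of conditional probability). *)
Definition cond_prob_first_minus (Phi : R -> R) (sigma : R) (n : nat) : R :=
  prob_plus_then_minus Phi sigma n / prob_all_plus Phi sigma n.

(* Main.v *)
Require Import Defs.
From Stdlib Require Import Reals Lra.
From Coquelicot Require Import Coquelicot.
From Stdlib Require Import Lia Classical.
Open Scope R_scope.

Notation phi := std_normal_density.

Lemma sq2pi_gt2 : 2 < sqrt (2 * PI).
Proof.
  pose proof PI2_3_2. apply Rle_lt_trans with (sqrt (2*2)).
  rewrite sqrt_square; lra.
  apply sqrt_lt_1; lra.
Qed.

Lemma phi_pos x : 0 < phi x.
Proof. unfold std_normal_density. apply Rdiv_lt_0_compat. apply exp_pos.
  pose proof sq2pi_gt2; lra. Qed.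

Lemma phi_lt x : phi x < / 2.
Proof. unfold std_normal_density. pose proof sq2pi_gt2.
  assert (exp (- (x * x) / 2) <= 1).
  { rewrite <- exp_0. destruct (Req_dec x 0). subst. replace (- (0*0)/2) with 0 by lra. lra.
    left; apply exp_increasing. assert (0 < x*x) by nra. lra. }
  unfold Rdiv. apply Rle_lt_trans with (1 * / sqrt (2 * PI)).
  apply Rmult_le_compat_r. left; apply Rinv_0_lt_compat; lra. lra.
  rewrite Rmult_1_l. apply Rinv_lt_contravar; lra.
Qed.

Lemma phi_le x : phi x <= / 2.
Proof. left; apply phi_lt. Qed.

Lemma phi_even x : phi (- x) = phi x.
Proof. unfold std_normal_density. f_equal. f_equal. f_equal. ring. Qed.

Lemma phi_deriv x : is_derive phi x (- x * phi x).
Proof. unfold std_normal_density. auto_derive. auto. unfold Rdiv. field. pose proof sq2pi_gt2; lra. Qed.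

Section S.
Variable Phi : R -> R.
Hypothesis HD : forall x, derivable_pt_lim Phi x (phi x).

Lemma isdPhi x : is_derive Phi x (phi x).
Proof. apply is_derive_Reals, HD. Qed.
Lemma exPhi x : ex_derive (fun x => Phi x) x.
Proof. exists (phi x). apply isdPhi. Qed.
Lemma DPhi x : Derive (fun x => Phi x) x = phi x.
Proof. apply is_derive_unique, isdPhi. Qed.

Lemma der_f y : 0 < y -> derivable_pt_lim (fun y => phi y / y - Phi (- y)) y (- phi y / (y*y)).
Proof. intro Hy. apply is_derive_Reals. unfold std_normal_density. auto_derive.
  split. lra. split. apply exPhi. auto.
  rewrite DPhi. unfold std_normal_density. replace (- y * - y) with (y*y) by ring.
  unfold Rdiv; field. pose proof sq2pi_gt2. lra.
Qed.

Lemma der_g y : derivable_pt_lim (fun y => Phi (- y) - phi y * y / (1 + y*y)) y (- 2 * phi y / ((1 + y*y)*(1+y*y))).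
Proof. apply is_derive_Reals. unfold std_normal_density. auto_derive.
  split. apply exPhi. split. nra. auto.
  rewrite DPhi. unfold std_normal_density. replace (- y * - y) with (y*y) by ring.
  unfold Rdiv; field. pose proof sq2pi_gt2. nra.
Qed.
Hypothesis HL : forall e, 0 < e -> exists M, forall x, x < M -> Rabs (Phi x) < e.

Lemma Phi_incr x y : x < y -> Phi x < Phi y.
Proof. intro H. destruct (MVT_cor2 Phi phi x y H) as [c [E _]].
  intros; apply HD. pose proof (phi_pos c). nra. Qed.

Lemma Phi_pos x : 0 < Phi x.
Proof.
  destruct (Rlt_or_le 0 (Phi x)) as [h|h]; auto. exfalso.
  pose proof (Phi_incr (x-1) x ltac:(lra)) as I.
  destruct (HL (Phi x - Phi (x-1)) ltac:(lra)) as [M HM].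
  set (z := Rmin M (x-1) - 1).
  assert (z < M) by (unfold z; pose proof (Rmin_l M (x-1)); lra).
  assert (z < x - 1) by (unfold z; pose proof (Rmin_r M (x-1)); lra).
  specialize (HM z H). pose proof (Phi_incr _ _ H0).
  apply Rabs_def2 in HM. lra.
Qed.

Lemma Mills_up y : 0 < y -> Phi (- y) <= phi y / y.
Proof.
  intro Hy. destruct (Rle_or_lt (Phi (-y)) (phi y / y)) as [h|h]; auto. exfalso.
  set (e := Phi (-y) - phi y / y).
  destruct (HL e ltac:(unfold e; lra)) as [M HM].
  set (y1 := Rmax y (- M) + 1).
  assert (y < y1) by (unfold y1; pose proof (Rmax_l y (-M)); lra).
  assert (- y1 < M) by (unfold y1; pose proof (Rmax_r y (-M)); lra).
  destruct (MVT_cor2 (fun y => phi y / y - Phi (- y)) (fun y => - phi y / (y*y)) y y1 H)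
    as [c [E Hc]].
  { intros c Hc. apply der_f. lra. }
  assert (- phi c / (c*c) * (y1 - y) <= 0).
  { assert (0 < phi c / (c*c)) by (apply Rdiv_lt_0_compat; [apply phi_pos | nra]).
    unfold Rdiv in *. nra. }
  assert (0 < phi y1 / y1) by (apply Rdiv_lt_0_compat; [apply phi_pos | lra]).
  specialize (HM _ H0). apply Rabs_def2 in HM. unfold e in *. lra.
Qed.

Lemma Mills_low y : 0 <= y -> phi y * y / (1 + y*y) <= Phi (- y).
Proof.
  intro Hy. destruct (Rle_or_lt (phi y * y / (1 + y*y)) (Phi (-y))) as [h|h]; auto. exfalso.
  set (e := phi y * y / (1 + y*y) - Phi (-y)).
  assert (He : 0 < e) by (unfold e; lra).
  set (y1 := Rmax y (/ e) + 1).
  assert (y < y1) by (unfold y1; pose proof (Rmax_l y (/e)); lra).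
  assert (/ e < y1) by (unfold y1; pose proof (Rmax_r y (/e)); lra).
  destruct (MVT_cor2 (fun y => Phi (- y) - phi y * y / (1 + y*y))
     (fun y => - 2 * phi y / ((1 + y*y)*(1+y*y))) y y1 H) as [c [E Hc]].
  { intros c Hc. apply der_g. }
  assert (- 2 * phi c / ((1 + c*c)*(1+c*c)) * (y1 - y) <= 0).
  { assert (0 < phi c / ((1 + c*c)*(1+c*c))) by (apply Rdiv_lt_0_compat; [apply phi_pos | nra]).
    unfold Rdiv in *. nra. }
  assert (phi y1 * y1 / (1 + y1*y1) < e).
  { pose proof (phi_le y1). pose proof (phi_pos y1).
    assert (0 < /e) by (apply Rinv_0_lt_compat; lra).
    assert (y1 * e > 1).
    { apply Rmult_lt_compat_r with (r := e) in H0; auto. rewrite Rinv_l in H0; lra. }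
    apply Rmult_lt_reg_r with (1 + y1*y1). nra.
    unfold Rdiv. rewrite Rmult_assoc, Rinv_l by nra. nra. }
  pose proof (Phi_pos (- y1)). unfold e in *. lra.
Qed.

Lemma Phi_le x y : x <= y -> Phi x <= Phi y.
Proof. intro H; destruct H. left; apply Phi_incr; auto. subst; lra. Qed.

Lemma Phi_lt1 u : u <= 0 -> Phi u < 1.
Proof.
  intro Hu. apply Rle_lt_trans with (Phi 0). apply Phi_le; auto.
  destruct (MVT_cor2 Phi phi (- (1)) 0 ltac:(lra)) as [c [E _]]. intros; apply HD.
  pose proof (phi_lt c). pose proof (Mills_up 1 ltac:(lra)).
  pose proof (phi_lt 1). replace (phi 1 / 1) with (phi 1) in H0 by field. lra.
Qed.

Variable sigma : R.
Hypothesis Hs : 0 < sigma.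

Lemma Gp x : G_plus Phi sigma (- x) = Phi (- (sigma/2 * x + 1/sigma)).
Proof. unfold G_plus, F_plus. f_equal. field. lra. Qed.
Lemma Gm x : G_minus Phi sigma (- x) = Phi (- (sigma/2 * x - 1/sigma)).
Proof. unfold G_minus, F_minus. f_equal. field. lra. Qed.

Lemma ln_nonpos x : x <= 0 -> ln x = 0.
Proof. intro H. unfold ln. case (Rlt_dec 0 x); intro h; [exfalso; lra | reflexivity]. Qed.

Lemma ln_le_sub1 x : 0 < x -> ln x <= x - 1.
Proof. intro H. pose proof (exp_ineq1_le (ln x)). rewrite exp_ln in H0; lra. Qed.

Lemma D_nonneg x : 0 <= x -> 0 <= D_plus Phi sigma x.
Proof.
  intro Hx. unfold D_plus. rewrite Gp, Gm.
  assert (0 < 1/sigma) by (apply Rdiv_lt_0_compat; lra).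
  assert (0 <= sigma/2*x) by (apply Rmult_le_pos; lra).
  pose proof (Phi_incr (- (sigma / 2 * x + 1 / sigma)) (- (sigma / 2 * x - 1 / sigma)) ltac:(lra)).
  pose proof (Phi_lt1 (- (sigma / 2 * x + 1 / sigma)) ltac:(lra)).
  set (p := Phi (- (sigma / 2 * x + 1 / sigma))) in *.
  set (q := Phi (- (sigma / 2 * x - 1 / sigma))) in *.
  destruct (Rlt_or_le 0 (1 - q)).
  - rewrite <- ln_1. apply ln_le. lra.
    apply Rmult_le_reg_r with (1 - q); auto. unfold Rdiv. rewrite Rmult_assoc, Rinv_l by lra. lra.
  - destruct (Req_dec (1 - q) 0) as [E|E].
    + rewrite E. unfold Rdiv; rewrite Rinv_0, Rmult_0_r, ln_nonpos; lra.
    + rewrite ln_nonpos. lra. unfold Rdiv.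
      assert (/ (1 - q) < 0) by (apply Rinv_lt_0_compat; lra). nra.
Qed.

Lemma D_upper x : 1 <= sigma/2 * x - 1/sigma ->
  D_plus Phi sigma x <= exp (- ((sigma/2*x - 1/sigma) * (sigma/2*x - 1/sigma)) / 2).
Proof.
  intro Hw. unfold D_plus. rewrite Gp, Gm.
  set (w := sigma/2*x - 1/sigma) in *.
  assert (0 < 1/sigma) by (apply Rdiv_lt_0_compat; lra).
  pose proof (Mills_up w ltac:(lra)).
  pose proof (phi_pos w). pose proof (phi_lt w).
  assert (phi w / w <= phi w).
  { unfold Rdiv. apply Rmult_le_reg_r with w. lra. rewrite Rmult_assoc, Rinv_l by lra. nra. }
  assert (Hneg : - (sigma / 2 * x + 1 / sigma) <= 0) by (unfold w in Hw; lra).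
  pose proof (Phi_lt1 _ Hneg). pose proof (Phi_pos (- (sigma / 2 * x + 1 / sigma))).
  pose proof (Phi_pos (- w)).
  set (p := Phi (- (sigma / 2 * x + 1 / sigma))) in *.
  set (q := Phi (- w)) in *.
  assert (Hq : q < /2) by lra.
  apply Rle_trans with (ln (/ (1 - q))).
  { apply ln_le. apply Rdiv_lt_0_compat; lra.
    unfold Rdiv. rewrite <- (Rmult_1_l (/ (1-q))) at 2. apply Rmult_le_compat_r.
    left; apply Rinv_0_lt_compat; lra. lra. }
  apply Rle_trans with (/ (1 - q) - 1).
  { apply ln_le_sub1. apply Rinv_0_lt_compat; lra. }
  apply Rle_trans with (2 * q).
  { replace (/ (1 - q) - 1) with (q / (1 - q)) by (field; lra).
    apply Rmult_le_reg_r with (1 - q). lra. unfold Rdiv. rewrite Rmult_assoc, Rinv_l by lra. nra. }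
  apply Rle_trans with (2 * phi w). lra.
  unfold std_normal_density. pose proof sq2pi_gt2.
  pose proof (exp_pos (- (w * w) / 2)).
  unfold Rdiv at 1. rewrite <- Rmult_assoc.
  apply Rle_trans with (exp (- (w * w) / 2) * 2 * / 2).
  2: { right; field. }
  rewrite (Rmult_comm 2 (exp _)).
  apply Rmult_le_compat_l. nra. left; apply Rinv_lt_contravar; lra.
Qed.

Notation ell n := (ell_plus Phi sigma n).

Lemma ell_props n : 0 <= ell n /\ ell n <= ell (S n).
Proof.
  induction n as [|n IH].
  - simpl. pose proof (D_nonneg 0 ltac:(lra)). lra.
  - destruct IH as [h1 h2]. assert (0 <= ell (S n)) by lra. split; auto.
    change (ell (S (S n))) with (ell (S n) + D_plus Phi sigma (ell (S n))).
    pose proof (D_nonneg _ H). lra.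
Qed.

Lemma ell_mono m n : (m <= n)%nat -> ell m <= ell n.
Proof.
  induction 1. lra. pose proof (ell_props m0). lra.
Qed.

Lemma step_pos n : 0 < prob_plus_step Phi sigma n.
Proof.
  unfold prob_plus_step. rewrite Gp. destruct (ell_props n).
  assert (0 < 1/sigma) by (apply Rdiv_lt_0_compat; lra).
  assert (0 <= sigma/2 * ell n) by (apply Rmult_le_pos; lra).
  pose proof (Phi_lt1 (- (sigma / 2 * ell n + 1 / sigma)) ltac:(lra)). lra.
Qed.

Lemma all_pos n : 0 < prob_all_plus Phi sigma n.
Proof.
  induction n. simpl; lra. simpl. pose proof (step_pos n). nra.
Qed.

Lemma cond_eq n : cond_prob_first_minus Phi sigma n = Phi (- (sigma/2 * ell n + 1/sigma)).
Proof.
  unfold cond_prob_first_minus, prob_plus_then_minus, prob_minus_step.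
  rewrite Gp. pose proof (all_pos n). field. lra.
Qed.


Lemma quad_bound p q r : p < 0 -> forall u, p*u*u + q*u + r <= r - q*q/(4*p).
Proof.
  intros Hp u.
  assert (E : p*u*u + q*u + r - (r - q*q/(4*p)) = (2*p*u+q)*(2*p*u+q) / (4*p)) by (field; lra).
  assert ((2*p*u+q)*(2*p*u+q) / (4*p) <= 0).
  { unfold Rdiv. assert (/ (4*p) < 0) by (apply Rinv_lt_0_compat; lra).
    pose proof (Rle_0_sqr (2*p*u+q)) as Hs0; unfold Rsqr in Hs0. nra. }
  lra.
Qed.

Lemma exp_le x y : x <= y -> exp x <= exp y.
Proof. intro H; destruct H. left; apply exp_increasing; auto. subst; lra. Qed.

Definition Vf (sigma eps x : R) := exp ((sigma/2*x + 1/sigma + 1)*(sigma/2*x + 1/sigma + 1) / (2*(1+eps))).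

Lemma Vstep eps : 0 < eps -> exists K, 0 < K /\ forall x, 0 <= x -> 1 <= sigma/2*x - 1/sigma ->
   Vf sigma eps (x + D_plus Phi sigma x) <= Vf sigma eps x + K.
Proof.
  intro He.
  set (a := sigma/2). set (b := 1/sigma). set (c1 := 2*b+1).
  assert (Ha : 0 < a) by (unfold a; lra).
  assert (Hb : 0 < b) by (unfold b; apply Rdiv_lt_0_compat; lra).
  set (pp := / (2*(1+eps)) - /2).
  set (qq := 2*a/(2*(1+eps)) + c1 + 2).
  set (rr := a*a/(2*(1+eps)) - c1*c1/2 + a).
  assert (Hpp : pp < 0).
  { unfold pp. assert (/ (2*(1+eps)) < /2) by (apply Rinv_lt_contravar; nra). lra. }
  exists (a * exp (rr - qq*qq/(4*pp))). split. apply Rmult_lt_0_compat; auto; apply exp_pos.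
  intros x Hx Hw.
  pose proof (D_nonneg x Hx) as HD0. pose proof (D_upper x Hw) as HDu.
  fold a b in Hw, HDu.
  unfold Vf. fold a b.
  set (u := a*x + b + 1). set (D := D_plus Phi sigma x) in *.
  set (w := a*x - b) in *.
  assert (Hu : 0 <= u) by (unfold u; nra).
  assert (Ew : w = u - c1) by (unfold w, u, c1; ring).
  replace (a * (x + D) + b + 1) with (u + a*D) by (unfold u; ring).
  set (E := exp (- (w * w) / 2)) in *.
  assert (HE1 : E <= 1).
  { unfold E. rewrite <- exp_0. apply exp_le. assert (0 <= w*w) by nra. lra. }
  set (Dl := a * D).
  assert (HDl0 : 0 <= Dl) by (unfold Dl; nra).
  assert (HDla : Dl <= a) by (unfold Dl; nra).
  assert (HDlE : Dl <= a * E) by (unfold Dl; nra).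
  set (A := (u + Dl) * (u + Dl) / (2 * (1 + eps))).
  set (B := u * u / (2 * (1 + eps))).
  assert (Hi : 0 < / (2*(1+eps))) by (apply Rinv_0_lt_compat; lra).
  assert (Hi2 : / (2*(1+eps)) <= /2) by (apply Rinv_le_contravar; lra).
  assert (HAB : A - B = Dl*(2*u+Dl) * / (2*(1+eps))) by (unfold A, B; field; lra).
  assert (HAB2 : A - B <= Dl * (2*u + a)).
  { rewrite HAB. assert (0 <= Dl*(2*u+Dl)) by nra.
    apply Rle_trans with (Dl*(2*u+Dl) * /2). apply Rmult_le_compat_l; auto. nra. }
  assert (HAB0 : 0 <= A - B) by (rewrite HAB; apply Rmult_le_pos; [nra | lra]).
  assert (Hdiff : exp A - exp B <= exp A * (A - B)).
  { replace (exp B) with (exp A * exp (B - A)) by (rewrite <- exp_plus; f_equal; ring).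
    pose proof (exp_ineq1_le (B - A)). pose proof (exp_pos A). nra. }
  assert (HA : exp A <= exp ((u + a)*(u+a) / (2*(1+eps)))).
  { apply exp_le. unfold A. apply Rmult_le_compat_r. lra. nra. }
  assert (H2u : 2*u + a <= exp (2*u + a)) by (pose proof (exp_ineq1_le (2*u+a)); lra).
  assert (HQ : (u + a)*(u+a) / (2*(1+eps)) + (- (w*w)/2) + (2*u+a) = pp*u*u + qq*u + rr).
  { rewrite Ew. unfold pp, qq, rr. field. lra. }
  pose proof (quad_bound pp qq rr Hpp u) as Hq.
  assert (exp A * (A - B) <= a * exp (rr - qq * qq / (4 * pp))).
  { apply Rle_trans with (exp ((u + a)*(u+a) / (2*(1+eps))) * (a * E * exp (2*u+a))).
    { apply Rmult_le_compat; try lra. left; apply exp_pos.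
      apply Rle_trans with (Dl * (2*u+a)); auto.
      apply Rle_trans with (a * E * (2*u+a)). apply Rmult_le_compat_r; nra.
      apply Rmult_le_compat_l. unfold E; pose proof (exp_pos (- (w * w) / 2)); nra. auto. }
    replace (exp ((u + a)*(u+a) / (2*(1+eps))) * (a * E * exp (2*u+a))) with
       (a * exp ((u + a)*(u+a) / (2*(1+eps)) + (- (w*w)/2) + (2*u+a))).
    2: { unfold E. rewrite !exp_plus. ring. }
    apply Rmult_le_compat_l. lra. apply exp_le. lra. }
  fold A B. lra.
Qed.


Lemma Vf_mono eps x y : 0 < eps -> 0 <= x -> x <= y -> Vf sigma eps x <= Vf sigma eps y.
Proof.
  intros He Hx Hxy. unfold Vf. apply exp_le. unfold Rdiv. apply Rmult_le_compat_r.
  left; apply Rinv_0_lt_compat; lra.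
  assert (0 < 1/sigma) by (apply Rdiv_lt_0_compat; lra).
  assert (0 <= sigma/2*x) by (apply Rmult_le_pos; lra).
  assert (sigma/2*x <= sigma/2*y) by (apply Rmult_le_compat_l; lra).
  nra.
Qed.

Lemma Rpower_ge1 t eps : (1 <= t)%nat -> 0 < eps -> 1 <= Rpower (INR t) (1 + eps).
Proof.
  intros Ht He. assert (1 <= INR t) by (apply (le_INR 1); auto).
  apply Rle_trans with (Rpower 1 (1+eps)).
  unfold Rpower. rewrite ln_1, Rmult_0_r, exp_0. lra.
  apply Rle_Rpower_l; lra.
Qed.

Lemma div_le_self c r : 0 <= c -> 1 <= r -> c / r <= c.
Proof. intros. unfold Rdiv. rewrite <- (Rmult_1_r c) at 2.
  apply Rmult_le_compat_l; auto. rewrite <- Rinv_1. apply Rinv_le_contravar; lra. Qed.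

Lemma main eps : 0 < eps ->
  exists k : R, 0 < k /\
    forall t : nat, (1 <= t)%nat ->
      cond_prob_first_minus Phi sigma (t - 1) > k / Rpower (INR t) (1 + eps).
Proof.
  intro He.
  set (a := sigma/2). set (b := 1/sigma).
  assert (Ha : 0 < a) by (unfold a; lra).
  assert (Hb : 0 < b) by (unfold b; apply Rdiv_lt_0_compat; lra).
  set (c0 := Phi (- (1 + 2*b))).
  assert (Hc0 : 0 < c0) by apply Phi_pos.
  assert (Bnd1 : forall n, a * ell n - b < 1 -> cond_prob_first_minus Phi sigma n > c0).
  { intros n Hn. rewrite cond_eq. fold a b. apply Phi_incr. lra. }
  destruct (Classical_Prop.classic (exists N, 1 <= a * ell N - b)) as [[N HN]|HnoN].
  2: { exists (c0/2). split. lra. intros t Ht.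
       assert (a * ell (t-1) - b < 1).
       { destruct (Rlt_or_le (a * ell (t-1) - b) 1); auto. exfalso; apply HnoN; eauto. }
       pose proof (Bnd1 _ H). pose proof (Rpower_ge1 t eps Ht He).
       assert (c0/2 / Rpower (INR t) (1 + eps) <= c0/2).
       { apply div_le_self; lra. }
       lra. }
  destruct (Vstep eps He) as [K [HK HVs]].
  set (A := Vf sigma eps (ell N) + K).
  assert (HA : 0 < A) by (unfold A, Vf; pose proof (exp_pos ((sigma / 2 * ell N + 1 / sigma + 1) * (sigma / 2 * ell N + 1 / sigma + 1) / (2 * (1 + eps)))); lra).
  assert (Chain : forall j, Vf sigma eps (ell (N + j)) <= Vf sigma eps (ell N) + K * INR j).
  { induction j.
    - rewrite Nat.add_0_r. simpl. lra.
    - rewrite Nat.add_succ_r. change (ell (S (N + j))) with (ell (N+j) + D_plus Phi sigma (ell (N+j))).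
      assert (ell N <= ell (N + j)) by (apply ell_mono; lia).
      pose proof (HVs (ell (N+j)) (proj1 (ell_props _)) ltac:(fold a b; nra)).
      rewrite S_INR. lra. }
  assert (VB : forall n, Vf sigma eps (ell n) <= A * INR (S n)).
  { intro n. assert (1 <= INR (S n)) by (rewrite S_INR; pose proof (pos_INR n); lra).
    destruct (Nat.le_gt_cases n N) as [h|h].
    - apply Rle_trans with (Vf sigma eps (ell N)).
      apply Vf_mono; auto. apply ell_props. apply ell_mono; auto.
      unfold A. assert (0 < Vf sigma eps (ell N)) by (unfold Vf; apply exp_pos). nra.
    - replace n with (N + (n - N))%nat by lia. eapply Rle_trans. apply Chain.
      replace (N + (n - N))%nat with n by lia.
      assert (INR (n - N) <= INR (S n)) by (apply le_INR; lia).
      assert (0 < Vf sigma eps (ell N)) by (unfold Vf; apply exp_pos).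
      unfold A. nra. }
  set (c1 := / (2 * sqrt (2 * PI))).
  assert (Hc1 : 0 < c1) by (unfold c1; pose proof sq2pi_gt2; apply Rinv_0_lt_compat; lra).
  set (RA := Rpower A (1 + eps)).
  assert (HRA : 0 < RA) by (unfold RA, Rpower; apply exp_pos).
  exists (Rmin c0 (c1 / RA) / 2). split.
  { assert (0 < c1/RA) by (apply Rdiv_lt_0_compat; auto). unfold Rmin; destruct Rle_dec; lra. }
  intros t Ht.
  set (n := (t - 1)%nat).
  assert (Etn : t = S n) by (unfold n; lia).
  pose proof (Rpower_ge1 t eps Ht He) as HRt.
  set (Rt := Rpower (INR t) (1 + eps)) in *.
  assert (Hmin1 : Rmin c0 (c1 / RA) <= c0) by apply Rmin_l.
  assert (Hmin2 : Rmin c0 (c1 / RA) <= c1 / RA) by apply Rmin_r.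
  assert (Hmin0 : 0 < Rmin c0 (c1 / RA)).
  { assert (0 < c1/RA) by (apply Rdiv_lt_0_compat; auto). unfold Rmin; destruct Rle_dec; lra. }
  set (m := Rmin c0 (c1 / RA)) in *.
  destruct (Rlt_or_le (a * ell n - b) 1) as [Hl|Hl].
  { pose proof (Bnd1 _ Hl).
    assert (m/2 / Rt <= m/2).
    { apply div_le_self; lra. }
    lra. }
  rewrite cond_eq. fold a b.
  set (s := a * ell n + b).
  assert (Hs1 : 1 <= s) by (unfold s; lra).
  pose proof (Mills_low s ltac:(lra)) as ML.
  assert (L1 : c1 * exp (- ((s+1)*(s+1)) / 2) <= phi s * s / (1 + s*s)).
  { pose proof (exp_ineq1_le s) as Es. pose proof (exp_pos s).
    assert (Hr : / (2 * exp s) <= s / (1 + s*s)).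
    { apply Rmult_le_reg_r with (2 * exp s * (1 + s*s)). nra.
      replace (/ (2 * exp s) * (2 * exp s * (1 + s * s))) with (1 + s*s) by (field; lra).
      replace (s / (1 + s * s) * (2 * exp s * (1 + s * s))) with (2 * s * exp s) by (field; nra).
      nra. }
    unfold std_normal_density, c1.
    replace (- ((s+1)*(s+1)) / 2) with ((- (s*s)/2) + (- s) + (- / 2)) by field.
    rewrite !exp_plus.
    assert (exp (- / 2) <= 1) by (rewrite <- exp_0; apply exp_le; lra).
    pose proof (exp_pos (- (s*s)/2)). pose proof (exp_pos (- /2)). pose proof sq2pi_gt2.
    pose proof (exp_pos (- s)).
    assert (P0 : 0 < / (2 * sqrt (2 * PI))) by (apply Rinv_0_lt_compat; lra).
    apply Rle_trans with (/ (2 * sqrt (2 * PI)) * (exp (- (s * s) / 2) * exp (- s))).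
    { apply Rmult_le_compat_l. lra.
      assert (0 < exp (- (s * s) / 2) * exp (- s)) by (apply Rmult_lt_0_compat; lra). nra. }
    rewrite exp_Ropp.
    apply Rle_trans with (exp (- (s * s) / 2) / sqrt (2 * PI) * / (2 * exp s)).
    { right; field. lra. }
    replace (exp (- (s * s) / 2) / sqrt (2 * PI) * s / (1 + s * s)) with
      (exp (- (s * s) / 2) / sqrt (2 * PI) * (s / (1 + s * s))) by (field; nra).
    apply Rmult_le_compat_l; auto.
    apply Rdiv_le_0_compat; lra. }
  assert (L2 : exp ((s+1)*(s+1)/2) <= RA * Rt).
  { replace (exp ((s+1)*(s+1)/2)) with (Rpower (Vf sigma eps (ell n)) (1 + eps)).
    2: { unfold Rpower, Vf. rewrite ln_exp. f_equal. fold a b s.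
         replace (s + 1) with (a * ell n + b + 1) by (unfold s; ring). field. lra. }
    unfold RA, Rt. rewrite Rpower_mult_distr; auto.
    apply Rle_Rpower_l. lra. split. unfold Vf; apply exp_pos. rewrite Etn. apply VB.
    rewrite Etn, S_INR. pose proof (pos_INR n); lra. }
  assert (L3 : c1 / (RA * Rt) <= c1 * exp (- ((s+1)*(s+1)) / 2)).
  { replace (- ((s+1)*(s+1)) / 2) with (- ((s+1)*(s+1)/2)) by field.
    rewrite exp_Ropp. unfold Rdiv. apply Rmult_le_compat_l. lra.
    apply Rinv_le_contravar. apply exp_pos. auto. }
  assert (L4 : m / 2 / Rt < c1 / (RA * Rt)).
  { assert (0 < Rt) by lra.
    replace (c1 / (RA * Rt)) with ((c1 / RA) / Rt) by (field; lra).
    unfold Rdiv. apply Rmult_lt_compat_r. apply Rinv_0_lt_compat; lra.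
    unfold Rdiv in Hmin2. lra. }
  lra.
Qed.

End S.

Theorem lemma7 (sigma : R) (Phi : R -> R) :
  0 < sigma -> is_std_normal_cdf Phi ->
  forall eps : R, 0 < eps ->
  exists k : R, 0 < k /\
    forall t : nat, (1 <= t)%nat ->
      cond_prob_first_minus Phi sigma (t - 1) > k / Rpower (INR t) (1 + eps).
Proof.
  intros Hs [HD HL] eps He. exact (main Phi HD HL sigma Hs eps He).
Qed.
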